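(* Let $q\ge 3$ be a prime power, $n\ge1$, and let $C\subseteq\mathbb{F}_q^n$ be a non-zero linear code of dimension $1\le t\le n$. For any integer $1\le r\le t$, $$d_r(C)=\min\{\dim_{\mathbb{F}_q}(A): A\in\mathcal{A}^H_q(n),\ \dim_{\mathbb{F}_q}(A\cap C)\ge r\}.$$
   Context: For $v\in\mathbb{F}_q^n$, $\mathrm{wt}(v):=|\{i: v_i\ne0\}|$; for a linear code $C$, $\mathrm{maxwt}(C):=\max\{\mathrm{wt}(c):c\in C\}$. One always has $\dim_{\mathbb{F}_q}(C)\le\mathrm{maxwt}(C)$; $\mathcal{A}^H_q(n)$ is the set of linear codes in $\mathbb{F}_q^n$ attaining equality (optimal linear anticodes). The support of a subspace $D$ is $\chi(D):=\{i\in\{1,\dots,n\}:\exists d\in D,\ d_i\ne0\}$, and the $r$-th generalized Hamming weight is $d_r(C):=\min\{|\chi(D)|: D\subseteq C,\ \dim_{\mathbb{F}_q}(D)=r\}$. *)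

(* Defs.v *)
(* Linear codes in F_q^n are represented, as in mxalgebra,
   by the row space of a matrix C : 'M[F]_n (square, so that all subspaces of
   'rV[F]_n live in one finite type); dim = \rank, subspace = (_ <= _)%MS,
   intersection = (_ :&: _)%MS. *)
From HB Require Import structures.
From mathcomp Require Import all_boot all_order all_algebra all_field.
Set Implicit Arguments. Unset Strict Implicit. Unset Printing Implicit Defensive.
Import GRing.Theory.
Local Open Scope ring_scope.

Section Codes.
Variables (F : finFieldType) (n : nat).

Definition wt (v : 'rV[F]_n) : nat := #|[set i : 'I_n | v 0 i != 0]|.

Definition maxwt (C : 'M[F]_n) : nat :=
  \max_(v : 'rV[F]_n | (v <= C)%MS) wt v.

Definition anticode (C : 'M[F]_n) : bool := \rank C == maxwt C.

Definition supp (D : 'M[F]_n) : {set 'I_n} :=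
  [set i : 'I_n | [exists d : 'rV[F]_n, (d <= D)%MS && (d 0 i != 0)]].

(* r-th generalized Hamming weight: min of |chi(D)| over r-dim subspaces D of C.
   (The default value n of the min is harmless: every candidate is <= n.) *)
Definition ghw (C : 'M[F]_n) (r : nat) : nat :=
  \big[minn/n]_(D : 'M[F]_n | (D <= C)%MS && (\rank D == r)) #|supp D|.

End Codes.

(* Main.v *)
Require Import Defs.
From HB Require Import structures.
From mathcomp Require Import all_boot all_order all_algebra all_field.
Import GRing.Theory.
Local Open Scope ring_scope.

Lemma bigmin_le (I : finType) (P : pred I) (G : I -> nat) (d : nat) (i : I) :
  P i -> (\big[minn/d]_(j | P j) G j <= G i)%N.
Proof.
move=> Pi; rewrite -big_filter.
have : i \in [seq j <- index_enum I | P j] by rewrite mem_filter Pi mem_index_enum.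
elim: [seq j <- index_enum I | P j] => //= a s IH; rewrite big_cons inE.
case/orP => [/eqP <-|/IH H]; first exact: geq_minl.
exact: leq_trans (geq_minr _ _) H.
Qed.

Lemma bigmin_led (I : finType) (P : pred I) (G : I -> nat) (d : nat) :
  (\big[minn/d]_(j | P j) G j <= d)%N.
Proof. by elim/big_rec: _ => // i x _ Hx; rewrite geq_min Hx orbT. Qed.

Lemma le_bigmin (I : finType) (P : pred I) (G : I -> nat) (d m : nat) :
  (m <= d)%N -> (forall i, P i -> m <= G i)%N ->
  (m <= \big[minn/d]_(j | P j) G j)%N.
Proof.
move=> md H; elim/big_ind: _ => //; first by move=> x y Hx Hy; rewrite leq_min Hx Hy.
Qed.

Section Aux.
Variables (F : finFieldType) (n : nat).

Definition cmx (S : {set 'I_n}) : 'M[F]_n := diag_mx (\row_i (i \in S)%:R).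

Lemma sub_cmx (S : {set 'I_n}) (v : 'rV[F]_n) : (v <= cmx S)%MS -> forall i, v 0 i != 0 -> i \in S.
Proof.
case/submxP=> x ->; move=> i; rewrite mul_mx_diag !mxE.
by case: (i \in S); rewrite // mulr0 eqxx.
Qed.

Lemma cmx_sub (S : {set 'I_n}) (v : 'rV[F]_n) : (forall i, v 0 i != 0 -> i \in S) -> (v <= cmx S)%MS.
Proof.
move=> H; have ->: v = v *m cmx S.
  apply/matrixP => i j; rewrite mul_mx_diag !mxE [i]ord1.
  case: (boolP (j \in S)) => hj; first by rewrite mulr1.
  by rewrite mulr0; apply/eqP; apply: contraNT hj; exact: H.
exact: submxMl.
Qed.

Lemma rank_cmx (S : {set 'I_n}) : \rank (cmx S) = #|S|.
Proof.
pose f := fun l : 'I_#|S| => enum_val l.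
have finj : injective f by apply: enum_val_inj.
pose R : 'M[F]_(#|S|, n) := rowsub f 1%:M.
have Rfree : row_free R.
  apply/row_freeP; exists R^T; rewrite -rowsubE; apply/matrixP => l l'.
  by rewrite !mxE (inj_eq finj) eq_sym.
suff -> : \rank (cmx S) = \rank R by apply/eqP.
apply: eqmx_rank; apply/andP; split; apply/row_subP => i.
  case: (boolP (i \in S)) => Hi.
    have -> : row i (cmx S) = row (enum_rank_in Hi i) R.
      apply/rowP => j; rewrite !mxE /f (enum_rankK_in Hi Hi).
      by rewrite Hi; case: (i == j).
    exact: row_sub.
  have -> : row i (cmx S) = 0.
    apply/rowP => j; rewrite !mxE.
    by rewrite (negbTE Hi) mul0rn.
  exact: sub0mx.
apply: cmx_sub => j; rewrite !mxE.
by case: (f i =P j) => [<- _|]; [exact: enum_valP | rewrite eqxx].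
Qed.

Lemma maxwt_cmx (S : {set 'I_n}) : maxwt (cmx S) = #|S|.
Proof.
rewrite /ghw; apply/eqP; rewrite eqn_leq; apply/andP; split.
  apply/bigmax_leqP => v vS; apply: subset_leq_card; apply/subsetP => i.
  rewrite inE; exact: sub_cmx vS i.
pose d : 'rV[F]_n := \row_i (i \in S)%:R.
have dS : (d <= cmx S)%MS.
  by apply: cmx_sub => i; rewrite mxE; case: (i \in S); rewrite ?eqxx.
have -> : #|S| = wt d.
  rewrite /wt; apply: eq_card => i; rewrite inE mxE.
  by case: (i \in S); rewrite ?oner_eq0 ?eqxx.
exact: leq_bigmax_cond.
Qed.

Lemma anticode_cmx (S : {set 'I_n}) : anticode (cmx S).
Proof. by rewrite /anticode rank_cmx maxwt_cmx. Qed.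

Lemma key (A : 'M[F]_n) : (3 <= #|F|)%N -> (\rank A < #|supp A|)%N ->
  exists2 v : 'rV[F]_n, (v <= A)%MS & (\rank A < wt v)%N.
Proof.
move=> F3 ltAS.
set m := \rank A^T.
pose f : 'I_m -> 'I_n := maxrankfun A^T.
have finj : injective f := @maxrankfun_inj _ _ _ A^T.
pose E : 'M[F]_(n, m) := (rowsub f 1%:M)^T.
have EE : forall p (v : 'M[F]_(p, n)), v *m E = \matrix_(i, l) v i (f l).
  move=> p v; rewrite /E -[v]trmxK -trmx_mul -rowsubE.
  by apply/matrixP => i l; rewrite !mxE.
have vf : forall (v : 'rV[F]_n) l, v 0 (f l) = (v *m E) 0 l.
  by move=> v l; rewrite EE mxE.
have fullAE : row_full (A *m E).
  rewrite /row_full -mxrank_tr trmx_mul /E trmxK -rowsubE.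
  exact: maxrowsub_free.
have rkm : m = \rank A by rewrite /m mxrank_tr.
pose K := pinvmx (A *m E) *m A.
have phiA : forall u : 'rV[F]_m, (u *m K <= A)%MS.
  by move=> u; rewrite mulmxA submxMl.
have phiE : forall u : 'rV[F]_m, u *m K *m E = u.
  by move=> u; rewrite /K (mulmxA u) -(mulmxA (u *m pinvmx (A *m E)) A E) mulmxKpV // submx_full.
have /subsetPn [j jS jf] : ~~ (supp A \subset [set f l | l : 'I_m]).
  apply/negP => /subset_leq_card; rewrite card_imset // card_ord rkm.
  by rewrite leqNgt ltAS.
have wtP : forall v : 'rV[F]_n, (forall l, v 0 (f l) != 0) -> v 0 j != 0 ->
    (\rank A < wt v)%N.
  move=> v Hf Hj; rewrite /wt -rkm.
  have -> : m.+1 = #|j |: [set f l | l : 'I_m]|.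
    by rewrite cardsU1 jf card_imset // card_ord.
  apply: subset_leq_card; apply/subsetP => i; rewrite !inE.
  by case/orP => [/eqP -> // | /imsetP [l _ ->]].
move: jS; rewrite inE => /existsP [z /andP [zA zj]].
pose z' := z - (z *m E) *m K.
have z'A : (z' <= A)%MS by rewrite addmx_sub // eqmx_opp phiA.
have z'E : z' *m E = 0 by rewrite mulmxBl phiE subrr.
have vfE : forall (v : 'rV[F]_n) (u : 'rV[F]_m), v *m E = u -> forall l, v 0 (f l) = u 0 l.
  by move=> v u H l; rewrite vf H.
case: (boolP (z' 0 j == 0)) => z'j; last first.
  pose v0 := (const_mx 1 : 'rV[F]_m) *m K.
  have v0E : forall l, v0 0 (f l) = 1 by move=> l; rewrite (vfE _ _ (phiE _)) mxE.
  case: (boolP (v0 0 j == 0)) => v0j.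
    exists (v0 + z'); first by rewrite addmx_sub ?phiA.
    apply: wtP => [l|]; rewrite mxE.
      by rewrite v0E (vfE _ _ z'E) mxE addr0 oner_eq0.
    by rewrite (eqP v0j) add0r.
  exists v0; first exact: phiA.
  by apply: wtP => [l|//]; rewrite v0E oner_eq0.
have zj' : \sum_i (z *m E) 0 i * K i j = z 0 j.
  have e1 : z' 0 j = z 0 j - ((z *m E) *m K) 0 j by rewrite /z' !mxE.
  move: (eqP z'j); rewrite e1 => /subr0_eq ->.
  by rewrite mxE.
case: (boolP [exists i0, K i0 j != 0]) => [/existsP [i0 Ki0]|/existsPn H]; last first.
  move: zj; rewrite -zj' big1 ?eqxx // => i _.
  by move: (H i); rewrite negbK => /eqP ->; rewrite mulr0.
set s := \sum_(i | i != i0) K i j.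
have /subsetPn [c _ cT] : ~~ ([set: F] \subset [set 0; - s / K i0 j]).
  apply/negP => /subset_leq_card; rewrite cardsT cards2 => H.
  by have := leq_trans F3 H; case: (_ != _).
move: cT; rewrite !inE negb_or => /andP [c0 cs].
pose u : 'rV[F]_m := \row_i (if i == i0 then c else 1).
exists (u *m K); first exact: phiA.
apply: wtP => [l|].
  by rewrite (vfE _ _ (phiE _)) mxE; case: (l == i0); rewrite ?oner_eq0.
rewrite mxE (bigD1 i0) //= mxE eqxx.
rewrite (eq_bigr (fun i => K i j)); last first.
  by move=> i /negbTE Hi; rewrite mxE Hi mul1r.
apply: contra cs => /eqP H.
apply/eqP; rewrite -[c](mulfK Ki0); congr (_ / _).
by apply/eqP; rewrite -subr_eq0 opprK H.
Qed.

Lemma anticode_supp (A : 'M[F]_n) : (3 <= #|F|)%N -> anticode A -> (#|supp A| <= \rank A)%N.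
Proof.
move=> F3 antiA; rewrite leqNgt; apply/negP => lt.
have [v vA vw] := key A F3 lt.
move: vw; rewrite (eqP antiA) ltnNge => /negP; apply.
exact: leq_bigmax_cond.
Qed.

Lemma supp_sub (D A : 'M[F]_n) : (D <= A)%MS -> (#|supp D| <= #|supp A|)%N.
Proof.
move=> DA; apply: subset_leq_card; apply/subsetP => i; rewrite !inE.
case/existsP => d /andP [dD di]; apply/existsP; exists d.
by rewrite (submx_trans dD DA) di.
Qed.

Lemma sub_cmx_supp (D : 'M[F]_n) : (D <= cmx (supp D))%MS.
Proof.
apply/row_subP => i; apply: cmx_sub => k Hk; rewrite inE.
by apply/existsP; exists (row i D); rewrite row_sub Hk.
Qed.

End Aux.
Arguments supp_sub {F n D A}.
Arguments anticode_supp {F n A}.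

Theorem theorem2p7 (F : finFieldType) (n t r : nat) (C : 'M[F]_n) :
  (3 <= #|F|)%N -> (1 <= n)%N ->
  \rank C = t -> (1 <= t)%N -> (t <= n)%N ->
  (1 <= r)%N -> (r <= t)%N ->
  ghw C r =
  \big[minn/n]_(A : 'M[F]_n | anticode A && (r <= \rank (A :&: C)%MS)%N) \rank A.
Proof.
move=> F3 n1 rkC t1 tn r1 rt.
rewrite /ghw; apply/eqP; rewrite eqn_leq; apply/andP; split.
- apply: le_bigmin; first exact: bigmin_led.
  move=> A /andP [antiA rAC].
  pose X := (A :&: C)%MS.
  pose D : 'M[F]_n := pid_mx r *m row_base X.
  have rD : \rank D = r.
    rewrite mxrankMfree ?row_base_free // rank_pid_mx //.
    exact: leq_trans rt tn.
  have DX : (D <= X)%MS by rewrite (submx_trans (submxMl _ _)) // eq_row_base.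
  have DC : (D <= C)%MS := submx_trans DX (capmxSr _ _).
  have DA : (D <= A)%MS := submx_trans DX (capmxSl _ _).
  apply: leq_trans (bigmin_le _ _ _ _ D _) _; first by rewrite DC rD eqxx.
  exact: leq_trans (supp_sub DA) (anticode_supp F3 antiA).
- apply: le_bigmin; first exact: bigmin_led.
  move=> D /andP [DC /eqP rD].
  apply: leq_trans (bigmin_le _ _ _ _ (@cmx F n (supp D)) _) _.
    rewrite anticode_cmx /= -rD; apply: mxrankS.
    by rewrite sub_capmx DC sub_cmx_supp.
  by rewrite rank_cmx.
Qed.
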